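(* For every backward trie $\mathsf{T}_b$ with $n$ nodes, over any alphabet, $\mathsf{DAWG}(\mathsf{T}_b)$ has $O(n^2)$ nodes and $O(n^2)$ edges. Moreover, there exist backward tries $\mathsf{T}_b$ with $n$ nodes, for arbitrarily large $n$ and over an alphabet of constant size, such that $\mathsf{DAWG}(\mathsf{T}_b)$ has $\Omega(n^2)$ nodes and $\Omega(n^2)$ edges.
   Context: An alphabet $\Sigma$ is a finite ordered set of characters. A forward trie $\mathsf{T}_f$ is a rooted tree with $n$ nodes in which every edge is directed from parent to child and labeled by a single character of $\Sigma$, such that the edges leaving any node carry pairwise distinct labels. The backward trie $\mathsf{T}_b$ is obtained from $\mathsf{T}_f$ by reversing the direction of every edge while keeping its label; it has the same nodes and root $r$. For nodes $u,v$ with $u$ an ancestor of $v$ (possibly $u=v$), $\mathrm{str}_b(v,u)$ is the string of labels read along the reversed (upward) path from $v$ to $u$. Define $\mathrm{Substr}(\mathsf{T}_b)=\{\mathrm{str}_b(v,u): u \text{ an ancestor of } v\}$. A string $Y\in\mathrm{Substr}(\mathsf{T}_b)$ is left-maximal on $\mathsf{T}_b$ if either there are distinct characters $a\ne b$ with $aY,bY\in\mathrm{Substr}(\mathsf{T}_b)$, or $Y=\mathrm{str}_b(\ell,u)$ for some leaf $\ell$ and some ancestor $u$ of $\ell$. For $Y\in\mathrm{Substr}(\mathsf{T}_b)$ let $\mathrm{lmx}_b(Y)$ be the shortest left-maximal string on $\mathsf{T}_b$ of the form $\gamma Y$ with $\gamma\in\Sigma^*$. Two substrings $Y,Y'$ are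 equivalent iff $\mathrm{lmx}_b(Y)=\mathrm{lmx}_b(Y')$; let $[Y]$ denote the class of $Y$. $\mathsf{DAWG}(\mathsf{T}_b)$ is the deterministic edge-labeled directed graph whose nodes are the classes $[Y]$, $Y\in\mathrm{Substr}(\mathsf{T}_b)$, with an edge labeled $a\in\Sigma$ from $[Y]$ to $[Ya]$ whenever $Y,Ya\in\mathrm{Substr}(\mathsf{T}_b)$. *)

(* Defs.v *)
From mathcomp Require Import all_boot.
Set Implicit Arguments. Unset Strict Implicit. Unset Printing Implicit Defensive.

(* A trie with node type T (n = #|T| nodes), alphabet S, root r.
   par v is the parent of v (par r = r by convention); the forward edge
   par v -> v (for v <> r) is labeled lab v; lab r is irrelevant. *)
Section Trie.
Variables (S T : finType) (r : T) (par : T -> T) (lab : T -> S).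

Definition is_trie : Prop :=
  [/\ par r = r,
      (forall v, exists k, iter k par v = r) &
      (forall u v, u != r -> v != r -> par u = par v -> lab u = lab v -> u = v)].

Definition up_ok (v : T) (k : nat) : Prop := forall i, i < k -> iter i par v != r.

(* str_b(v, iter k par v): labels read along the reversed path from v upward *)
Definition str_b (v : T) (k : nat) : seq S := [seq lab (iter i par v) | i <- iota 0 k].

Definition in_substr (Y : seq S) : Prop :=
  exists v k, up_ok v k /\ Y = str_b v k.

Definition is_leaf (l : T) : Prop := forall c, c != r -> par c != l.

Definition left_maximal (Y : seq S) : Prop :=
  in_substr Y /\
  ((exists a b : S, a != b /\ in_substr (a :: Y) /\ in_substr (b :: Y)) \/
   (exists l k, is_leaf l /\ up_ok l k /\ Y = str_b l k)).

Definition is_lmx (Y Z : seq S) : Prop :=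
  [/\ left_maximal Z, (exists g, Z = g ++ Y) &
      (forall Z', left_maximal Z' -> (exists g, Z' = g ++ Y) -> size Z <= size Z')].

Definition equiv_b (Y Y' : seq S) : Prop :=
  in_substr Y /\ in_substr Y' /\ exists Z, is_lmx Y Z /\ is_lmx Y' Z.

(* edge candidates of DAWG(T_b): ([Y], a, [Ya]) with Y, Ya substrings *)
Definition edge_ok (e : seq S * S) : Prop := in_substr e.1 /\ in_substr (rcons e.1 e.2).

Definition same_edge (e e' : seq S * S) : Prop :=
  equiv_b e.1 e'.1 /\ e.2 = e'.2 /\ equiv_b (rcons e.1 e.2) (rcons e'.1 e'.2).

End Trie.

Fixpoint pw_distinct (A : eqType) (R : A -> A -> Prop) (s : seq A) : Prop :=
  if s is x :: s' then (forall y, y \in s' -> ~ R x y) /\ pw_distinct R s' else True.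

(* s lists substrings from pairwise distinct classes = distinct DAWG nodes *)
Definition dawg_node_list (S T : finType) (r : T) (par : T -> T) (lab : T -> S)
    (s : seq (seq S)) : Prop :=
  (forall Y, Y \in s -> in_substr r par lab Y) /\ pw_distinct (equiv_b r par lab) s.

(* s lists pairwise distinct DAWG edges ([Y], a, [Ya]) *)
Definition dawg_edge_list (S T : finType) (r : T) (par : T -> T) (lab : T -> S)
    (s : seq (seq S * S)) : Prop :=
  (forall e, e \in s -> edge_ok r par lab e) /\ pw_distinct (same_edge r par lab) s.

(* Main.v *)
Require Import Defs.
From mathcomp Require Import all_boot.
From Stdlib Require Import Classical ClassicalEpsilon.
From mathcomp Require Import zify.
Set Implicit Arguments. Unset Strict Implicit. Unset Printing Implicit Defensive.

Section Gen.
Variables (S T : finType) (r : T) (par : T -> T) (lab : T -> S).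

Local Notation str := (str_b par lab).
Local Notation sub := (in_substr r par lab).
Local Notation LM := (left_maximal r par lab).
Local Notation lmx := (is_lmx r par lab).
Local Notation upok := (up_ok r par).

Lemma size_str v k : size (str v k) = k.
Proof. by rewrite /str_b size_map size_iota. Qed.

Lemma str_split v i j : str v (i + j) = str v i ++ str (iter i par v) j.
Proof.
rewrite /str_b iotaD map_cat; congr (_ ++ _).
have -> : iota (0 + i) j = map (addn i) (iota 0 j) by rewrite add0n -{1}(addn0 i) iotaDl.
rewrite -map_comp; apply: eq_map => t /=.
by rewrite addnC iterD.
Qed.

Lemma upok_split v i j : upok v (i + j) -> upok v i /\ upok (iter i par v) j.
Proof.
move=> H; split=> t Ht; first by apply: H; apply: leq_trans Ht (leq_addr _ _).
rewrite -iterD; apply: H; by rewrite addnC ltn_add2l.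
Qed.

Lemma sub_suffix g Y : sub (g ++ Y) -> sub Y.
Proof.
case=> v [k [Hu Hs]].
have Hk : k = size g + size Y by rewrite -size_cat Hs size_str.
rewrite Hk in Hu Hs; rewrite str_split in Hs.
have [_ H2] := upok_split Hu.
exists (iter (size g) par v), (size Y); split => //.
move: Hs => /eqP; rewrite eq_sym eqseq_cat ?size_str //; by case/andP=> _ /eqP.
Qed.

Lemma sub_prefix Y a : sub (rcons Y a) -> sub Y.
Proof.
case=> v [k [Hu Hs]].
have Hk : k = size Y + 1 by rewrite addn1 -(size_rcons Y a) Hs size_str.
rewrite Hk in Hu Hs; rewrite str_split -cats1 in Hs.
have [H1 _] := upok_split Hu.
exists v, (size Y); split => //.
move: Hs => /eqP; rewrite eq_sym eqseq_cat ?size_str //; by case/andP=> /eqP.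
Qed.

Lemma sub_child c v k : c != r -> par c = v -> upok v k ->
  upok c k.+1 /\ str c k.+1 = lab c :: str v k.
Proof.
move=> Hc Hp Hu; split.
  case=> [|t] Ht; first by [].
  by rewrite iterSr Hp; apply: Hu.
have -> : k.+1 = 1 + k by [].
by rewrite str_split /= Hp.
Qed.


Lemma iter_period v i p q : iter (i + p) par v = iter i par v ->
  iter (i + q * p) par v = iter i par v.
Proof.
move=> H; elim: q => [|q IH]; first by rewrite mul0n addn0.
by rewrite mulSn addnCA iterD IH -iterD addnC H.
Qed.

Lemma depth_bound v k : is_trie r par lab -> upok v k -> k <= #|T|.
Proof.
case=> _ Hreach _ Hu.
have Hun : uniq [seq iter i par v | i <- iota 0 k].
  apply/negPn/negP => /(uniqPn v) [i [j [Hij Hj Heq]]].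
  rewrite size_map size_iota in Hj.
  have Hi : i < k by apply: ltn_trans Hj.
  rewrite (nth_map 0) ?size_iota // (nth_map 0) ?size_iota // !nth_iota // !add0n in Heq.
  have [m Hm] := Hreach v.
  have Hmk : k <= m.
    rewrite leqNgt; apply/negP => Hmk; move: (Hu m Hmk); by rewrite Hm eqxx.
  set p := j - i.
  have Hp : 0 < p by rewrite subn_gt0.
  have Hper : iter (i + p) par v = iter i par v by rewrite subnKC ?(ltnW Hij).
  have Hm' : m = i + (m - i) %/ p * p + (m - i) %% p.
    by rewrite -addnA -divn_eq subnKC // (leq_trans (ltnW Hi) Hmk).
  have : iter m par v = iter (i + (m - i) %% p) par v.
    by rewrite {1}Hm' addnC iterD iter_period // -iterD addnC.
  rewrite Hm => Hr.
  have Hlt : i + (m - i) %% p < k.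
    have Hr' : (m - i) %% p < p := ltn_pmod _ Hp.
    have : i + (m - i) %% p < i + p by rewrite ltn_add2l.
    rewrite /p (subnKC (ltnW Hij)) => H'; exact: ltn_trans H' Hj.
  by move: (Hu _ Hlt); rewrite -Hr eqxx.
have := uniq_leq_size Hun (fun x _ => mem_enum T x).
by rewrite size_map size_iota -cardE.
Qed.

Lemma sub_size Y : is_trie r par lab -> sub Y -> size Y <= #|T|.
Proof. move=> Ht [v [k [Hu ->]]]; rewrite size_str; exact: depth_bound Hu. Qed.


Lemma occ_nonleaf Y v k : ~ LM Y -> upok v k -> Y = str v k ->
  exists c, c != r /\ par c = v.
Proof.
move=> HnL Hu HY.
case: (classic (is_leaf r par v)) => Hl.
  exfalso; apply: HnL; split; first by exists v, k.
  by right; exists v, k.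
have [c Hc] := not_all_ex_not _ _ Hl.
exists c; have [H1 H2] := imply_to_and _ _ Hc.
by split => //; apply/eqP/negP => /negP.
Qed.

Lemma ext_unique Y x y : ~ LM Y -> sub (x :: Y) -> sub (y :: Y) -> x = y.
Proof.
move=> HnL Hx Hy; case: (eqVneq x y) => // Hne; exfalso; apply: HnL; split.
  exact: (@sub_suffix [:: x]).
by left; exists x, y.
Qed.

Lemma ext_exists Y : sub Y -> ~ LM Y -> exists b, sub (b :: Y).
Proof.
move=> [v [k [Hu HY]]] HnL.
have [c [Hc Hp]] := occ_nonleaf HnL Hu HY.
have [H1 H2] := sub_child Hc Hp Hu.
by exists (lab c), c, k.+1; rewrite H2 HY.
Qed.

Lemma LM_lmx Y Z : LM Y -> lmx Y Z -> Z = Y.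
Proof.
move=> HL [_ [g Hg] Hmin].
have := Hmin Y HL (ex_intro _ [::] erefl).
rewrite Hg size_cat -{2}(add0n (size Y)) leq_add2r leqn0 size_eq0 => /eqP Hg0.
by rewrite Hg0.
Qed.

Lemma LM_lmx_self Y : LM Y -> lmx Y Y.
Proof.
move=> HL; split => //; first by exists [::].
by move=> Z' _ [g ->]; rewrite size_cat leq_addl.
Qed.

Lemma lmx_iff W W' :
  (forall Z, LM Z -> ((exists g, Z = g ++ W) <-> (exists g, Z = g ++ W'))) ->
  forall Z, lmx W Z <-> lmx W' Z.
Proof.
move=> H Z; split => [[H1 H2 H3]|[H1 H2 H3]]; split => //.
- by apply/H.
- by move=> Z' HL HZ; apply: H3 => //; apply/H.
- by apply/H.
- by move=> Z' HL HZ; apply: H3 => //; apply/H.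
Qed.

Lemma ext_set W b : ~ LM W -> sub (b :: W) -> forall Z, LM Z ->
  ((exists g, Z = g ++ W) <-> (exists g, Z = g ++ b :: W)).
Proof.
move=> HnL Hb Z HL; split; last by move=> [g ->]; exists (rcons g b); rewrite cat_rcons.
move=> [g Hg]; case/lastP: g Hg => [|g x] Hg.
  by exfalso; apply: HnL; move: HL; rewrite Hg.
rewrite -cats1 -catA /= in Hg.
have Hx : sub (x :: W) by apply: (@sub_suffix g); rewrite -Hg; case: HL.
by exists g; rewrite Hg (ext_unique HnL Hx Hb).
Qed.

Lemma ext_rcons Y b a : ~ LM Y -> sub (b :: Y) -> sub (rcons Y a) ->
  sub (b :: rcons Y a) /\ ~ LM (rcons Y a).
Proof.
move=> HnL Hb [v [k [Hu Hs]]].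
have Hk : k = size Y + 1 by rewrite addn1 -(size_rcons Y a) Hs size_str.
have HY : Y = str v (size Y).
  move: Hs; rewrite Hk str_split -cats1 => /eqP; rewrite eqseq_cat ?size_str //.
  by case/andP=> /eqP.
rewrite Hk in Hu; have [HuY _] := upok_split Hu.
have Hxb : forall x, sub (x :: rcons Y a) -> x = b.
  move=> x Hx; apply: (ext_unique HnL) => //.
  by apply: (@sub_prefix _ a); rewrite rcons_cons.
split.
  have [c [Hc Hp]] := occ_nonleaf HnL HuY HY.
  have [H1 H2] := sub_child Hc Hp Hu.
  have Hc' : sub (lab c :: rcons Y a) by exists c, (size Y + 1).+1; split => //; rewrite H2 -Hk Hs.
  by rewrite -(Hxb _ Hc').
move=> [Hsub [[x [y [Hxy [Hx Hy]]]]|[l [k' [Hl [Hu' Hs']]]]]].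
  by move: Hxy; rewrite (Hxb _ Hx) (Hxb _ Hy) eqxx.
apply: HnL; split; first by apply: sub_prefix Hsub.
right; exists l, (size Y); split => //; split.
  have Hk' : k' = size Y + 1 by rewrite addn1 -(size_rcons Y a) Hs' size_str.
  by rewrite Hk' in Hu'; case: (upok_split Hu').
have Hk' : k' = size Y + 1 by rewrite addn1 -(size_rcons Y a) Hs' size_str.
move: Hs'; rewrite Hk' str_split -cats1 => /eqP; rewrite eqseq_cat ?size_str //.
by case/andP=> /eqP.
Qed.

Lemma det n : forall Y Z0 a g, size g = n -> Z0 = g ++ Y -> lmx Y Z0 ->
  sub (rcons Y a) ->
  sub (rcons Z0 a) /\ (forall Z, lmx (rcons Y a) Z <-> lmx (rcons Z0 a) Z).
Proof.
elim: n => [|n IH] Y Z0 a g Hsz HZ0 Hl Hsa;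
  (case: (classic (LM Y)) => HL;
   [ by rewrite (LM_lmx HL Hl) | ]).
  by exfalso; apply: HL; move: Hsz => /eqP; rewrite size_eq0 => /eqP Hg;
     case: Hl; rewrite HZ0 Hg.
have HY : sub Y by apply: sub_prefix Hsa.
have [b Hb] := ext_exists HY HL.
have Hl' : lmx (b :: Y) Z0 by apply/(lmx_iff (ext_set HL Hb)).
have [_ [h Hh] _] := Hl'.
have Hsh : size h = n.
  have : size Z0 = size Z0 by [].
  rewrite {1}HZ0 {1}Hh !size_cat Hsz /= addnS -addSn => /eqP; rewrite eqn_add2r => /eqP.
  by case.
have [Hsr Hrc] := ext_rcons HL Hb Hsa.
have [H1 H2] := IH (b :: Y) Z0 a h Hsh Hh Hl' Hsr.
split => // Z; rewrite -H2.
exact: (lmx_iff (ext_set Hrc Hsr)).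
Qed.

Lemma ex_max (P : nat -> Prop) B : (forall m, P m -> m <= B) -> P 0 ->
  exists m, P m /\ forall m', P m' -> m' <= m.
Proof.
elim: B => [|B IH] HB H0.
  by exists 0; split => // m' /HB.
case: (classic (P B.+1)) => HP; first by exists B.+1; split.
apply: IH => // m Hm; have := HB m Hm; rewrite leq_eqVlt => /orP [/eqP Hm'|//].
by rewrite Hm' in Hm.
Qed.

Lemma ex_min (P : nat -> Prop) m : P m ->
  exists m0, P m0 /\ forall m', P m' -> m0 <= m'.
Proof.
elim/ltn_ind: m => m IH Hm.
case: (classic (exists m', P m' /\ m' < m)) => [[m' [Hm' Hlt]]|Hno].
  exact: IH Hm'.
exists m; split => // m' Hm'; rewrite leqNgt; apply/negP => Hlt.
by apply: Hno; exists m'.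
Qed.

Lemma lmx_exists Y : is_trie r par lab -> sub Y -> exists Z, lmx Y Z.
Proof.
move=> Ht HY.
pose P m := exists g, size g = m /\ sub (g ++ Y).
have [m [[g [Hg Hsub]] Hmax]] : exists m, P m /\ forall m', P m' -> m' <= m.
  apply: (@ex_max P #|T|); last by exists [::].
  move=> m [g [<- Hs]]; apply: leq_trans (sub_size Ht Hs); rewrite size_cat leq_addr //.
have HLM : LM (g ++ Y).
  case: (classic (LM (g ++ Y))) => // HnL.
  have [b Hb] := ext_exists Hsub HnL.
  have H : P (size g).+1 by exists (b :: g).
  by have := Hmax _ H; rewrite -Hg ltnn.
pose Q m := exists Z, [/\ LM Z, (exists g, Z = g ++ Y) & size Z = m].
have [m0 [[Z [HZ1 HZ2 HZ3]] Hmin]] := @ex_min Q _ (ex_intro _ (g ++ Y) (And3 HLM (ex_intro _ g erefl) erefl)).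
exists Z; split => // Z' H1 H2; rewrite HZ3; apply: Hmin; by exists Z'.
Qed.

End Gen.

Lemma count_bound (A : eqType) (U : finType) (u0 : U) (R : A -> A -> Prop)
  (f : A -> U -> Prop) (s : seq A) :
  (forall x, x \in s -> exists u, f x u) ->
  (forall x y u, x \in s -> y \in s -> f x u -> f y u -> R x y) ->
  pw_distinct R s -> size s <= #|U|.
Proof.
move=> Hex Hinj Hpw.
pose g x := epsilon (inhabits u0) (f x).
have Hg : forall x, x \in s -> f x (g x).
  by move=> x Hx; apply: epsilon_spec; apply: Hex.
have Hu : uniq (map g s).
  elim: s Hex Hinj Hpw Hg => [//|x s IH] Hex Hinj [Hx Hpw] Hg /=.
  apply/andP; split.
    apply/negP => /mapP [y Hy Heq].
    apply: (Hx y Hy); apply: (Hinj x y (g x)); rewrite ?inE ?eqxx ?Hy ?orbT //.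
      by apply: Hg; rewrite inE eqxx.
    by rewrite Heq; apply: Hg; rewrite inE Hy orbT.
  apply: IH => //.
  - by move=> y Hy; apply: Hex; rewrite inE Hy orbT.
  - by move=> y z u Hy Hz; apply: Hinj; rewrite inE ?Hy ?Hz orbT.
  - by move=> y Hy; apply: Hg; rewrite inE Hy orbT.
have := uniq_leq_size Hu (fun x _ => mem_enum U x).
by rewrite size_map -cardE.
Qed.

Lemma upper (S T : finType) (r : T) (par : T -> T) (lab : T -> S) :
  is_trie r par lab ->
  (forall s, dawg_node_list r par lab s -> size s <= 2 * #|T| ^ 2) /\
  (forall s, dawg_edge_list r par lab s -> size s <= 2 * #|T| ^ 2).
Proof.
move=> Ht.
have Hcard : #|{: T * 'I_#|T|.+1}| <= 2 * #|T| ^ 2.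
  rewrite card_prod card_ord; case: #|T| => [|n] //; nia.
split=> s [Hs Hpw]; apply: leq_trans Hcard.
- apply: (@count_bound _ _ (r, ord0) _
    (fun Y (u : T * 'I_#|T|.+1) => in_substr r par lab Y /\ exists Z,
       is_lmx r par lab Y Z /\ up_ok r par u.1 u.2 /\ Z = str_b par lab u.1 u.2) _ _ _ Hpw).
  + move=> Y HY; have HsY := Hs Y HY.
    have [Z HZ] := lmx_exists Ht HsY.
    have [[[v [k [Hu HZv]]] _] _ _] := HZ.
    have Hk : k < #|T|.+1 by rewrite ltnS; apply: depth_bound Ht Hu.
    exists (v, inord k); split => //; exists Z; split => //=.
    by rewrite inordK.
  + move=> Y Y' [v o] _ _ /= [H1 [Z [HZ [_ E]]]] [H1' [Z' [HZ' [_ E']]]].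
    rewrite E' -E in HZ'.
    by split => //; split => //; exists Z.
- apply: (@count_bound _ _ (r, ord0) _
    (fun e (u : T * 'I_#|T|.+1) => edge_ok r par lab e /\ exists Z,
       is_lmx r par lab e.1 Z /\ up_ok r par u.1 u.2 /\
       rcons Z e.2 = str_b par lab u.1 u.2) _ _ _ Hpw).
  + move=> e He; have [HsY Hsa] := Hs e He.
    have [Z HZ] := lmx_exists Ht HsY.
    have [_ [g Hg] _] := HZ.
    have [[v [k [Hu HZv]]] _] := det (erefl (size g)) Hg HZ Hsa.
    have Hk : k < #|T|.+1 by rewrite ltnS; apply: depth_bound Ht Hu.
    exists (v, inord k); split => //; exists Z; split => //=.
    by rewrite inordK.
  + move=> [Y a] [Y' a'] [v o] _ _ /= [[H1 H2] [Z [HZ [_ Heq]]]]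
      [[H1' H2'] [Z' [HZ' [_ Heq']]]] /=.
    rewrite -Heq' in Heq; have [EZ Ea] := rcons_inj Heq; subst Z' a'.
    split; first by split => //; split => //; exists Z.
    split => //; split => //; split => //.
    have [Z2 HZ2] := lmx_exists Ht H2.
    have [_ [g Hg] _] := HZ; have [_ H3] := det (erefl (size g)) Hg HZ H2.
    have [_ [g' Hg'] _] := HZ'; have [_ H3'] := det (erefl (size g')) Hg' HZ' H2'.
    by exists Z2; split => //; apply/H3'; apply/H3.
Qed.
Section Low.
Variable m : nat.
Hypothesis Hm : 0 < m.

Definition cA : 'I_3 := @Ordinal 3 0 isT.
Definition cB : 'I_3 := @Ordinal 3 1 isT.
Definition cC : 'I_3 := @Ordinal 3 2 isT.

Definition gf (k : nat) := if k <= 2 * m then k - 1 else k - m.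
Local Notation TT := 'I_(3 * m).+1.
Definition lpar (x : TT) : TT := inord (gf x).
Definition llab (x : TT) : 'I_3 :=
  if x <= m then cA else if x <= 2 * m then cB else cC.
Definition lr : TT := ord0.

Lemma gf_le k : gf k <= k.
Proof. rewrite /gf; case: ifP => ?; lia. Qed.

Lemma val_par (x : TT) : nat_of_ord (lpar x) = gf x.
Proof. rewrite /lpar inordK //; apply: leq_ltn_trans (gf_le _) (ltn_ord x). Qed.

Lemma val_iter t (x : TT) : nat_of_ord (iter t lpar x) = iter t gf x.
Proof. elim: t => [//|t IH]; by rewrite !iterS val_par IH. Qed.

Lemma iter_gf_le t k : iter t gf k <= k - t.
Proof.
elim: t => [|t IH]; first by rewrite subn0.
rewrite iterS; set y := iter t gf k in IH *.
rewrite /gf; case: ifP => ?; lia.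
Qed.

Lemma ltrie : is_trie lr lpar llab.
Proof.
split.
- by apply: val_inj; rewrite /= val_par.
- move=> v; exists v; apply: val_inj; rewrite /= val_iter /=.
  have := iter_gf_le v v; rewrite subnn; lia.
- move=> u v Hu Hv Hp Hl; apply: ord_inj.
  have Hu' : nat_of_ord u != 0 by apply: contra Hu => /eqP H; apply/eqP/val_inj.
  have Hv' : nat_of_ord v != 0 by apply: contra Hv => /eqP H; apply/eqP/val_inj.
  have := congr1 (@nat_of_ord _) Hp; rewrite !val_par /gf.
  have Hu3 := ltn_ord u; have Hv3 := ltn_ord v.
  move: Hl; rewrite /llab.
  case: ifP => H1; case: ifP => H2; case: ifP => H3; case: ifP => H4;
  move=> /(congr1 (@nat_of_ord _)) /= Hl' Hg; lia.
Qed.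

Definition leaf (j : nat) : TT := inord (2 * m + j).
Definition ww (j i : nat) : seq 'I_3 := cC :: nseq j cB ++ nseq i cA.

Lemma map_cst (A B : eqType) (F : A -> B) (s : seq A) y :
  (forall t, t \in s -> F t = y) -> map F s = nseq (size s) y.
Proof.
elim: s => [//|x s IH] H /=; rewrite H ?inE ?eqxx // IH // => t Ht.
by apply: H; rewrite inE Ht orbT.
Qed.

Lemma iter_leaf j t : 1 <= j <= m -> 1 <= t <= m + j ->
  iter t gf (2 * m + j) = m + j + 1 - t.
Proof.
move=> Hj; elim: t => [//|t IH] Ht.
rewrite iterS; case: t IH Ht => [|t] IH Ht.
  rewrite /= /gf; case: ifP => ?; lia.
rewrite IH; last lia.
rewrite /gf; case: ifP => ?; lia.
Qed.

Lemma val_leaf j : j <= m -> nat_of_ord (leaf j) = 2 * m + j.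
Proof. move=> Hj; rewrite /leaf inordK //; lia. Qed.

Lemma leaf_str j i : 1 <= j <= m -> i <= m ->
  up_ok lr lpar (leaf j) (1 + j + i) /\
  ww j i = str_b lpar llab (leaf j) (1 + j + i).
Proof.
move=> Hj Hi; have Hl := val_leaf (proj2 (andP Hj)).
split.
  case=> [|t] Ht.
    apply/eqP => /(congr1 (@nat_of_ord _)); rewrite Hl /=; lia.
  apply/eqP => /(congr1 (@nat_of_ord _)); rewrite val_iter Hl iter_leaf //=; lia.
rewrite /str_b !iotaD !map_cat /= /ww.
congr (_ :: _ ++ _).
- by rewrite /llab Hl; case: ifP => ?; [lia|]; case: ifP => ? //; lia.
- rewrite -{1}(size_iota (0 + 1) j); symmetry; apply: map_cst => t; rewrite mem_iota => Ht.
  rewrite /llab val_iter Hl iter_leaf //; last lia.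
  case: ifP => ?; [lia|]; case: ifP => ? //; lia.
- rewrite -{1}(size_iota (0 + (1 + j)) i); symmetry; apply: map_cst => t; rewrite mem_iota => Ht.
  rewrite /llab val_iter Hl iter_leaf //; last lia.
  case: ifP => ? //; lia.
Qed.

Lemma leaf_leaf j : 1 <= j <= m -> is_leaf lr lpar (leaf j).
Proof.
move=> Hj c _; have Hl := val_leaf (proj2 (andP Hj)).
apply/eqP => /(congr1 (@nat_of_ord _)); rewrite val_par Hl /gf.
have := ltn_ord c; case: ifP => ?; lia.
Qed.

Lemma ww_LM j i : 1 <= j <= m -> i <= m -> left_maximal lr lpar llab (ww j i).
Proof.
move=> Hj Hi; have [H1 H2] := leaf_str Hj Hi; split.
  by exists (leaf j), (1 + j + i).
by right; exists (leaf j), (1 + j + i); split; [apply: leaf_leaf|].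
Qed.

Lemma ww_inj j i j' i' : ww j i = ww j' i' -> j = j' /\ i = i'.
Proof.
move=> H.
have Hc := congr1 (count (pred1 cB)) H.
have Hs := congr1 size H.
rewrite /ww /= !count_cat !count_nseq /= in Hc.
rewrite /ww /= !size_cat !size_nseq in Hs.
lia.
Qed.

End Low.

Lemma pw_from_uniq (A : eqType) (R : A -> A -> Prop) (s : seq A) :
  uniq s -> (forall x y, x \in s -> y \in s -> R x y -> x = y) -> pw_distinct R s.
Proof.
elim: s => [//|x s IH] /= /andP [Hx Hu] H; split.
  move=> y Hy HR; have Hy' : y \in x :: s by rewrite inE Hy orbT.
  have Exy := H x y (mem_head _ _) Hy' HR.
  by move: Hx; rewrite Exy Hy.
apply: IH => // y z Hy Hz; apply: H; by rewrite inE ?Hy ?Hz orbT.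
Qed.

Lemma equiv_LM (S T : finType) (r : T) (par : T -> T) (lab : T -> S) Y Y' :
  left_maximal r par lab Y -> left_maximal r par lab Y' ->
  equiv_b r par lab Y Y' -> Y = Y'.
Proof.
move=> H1 H2 [_ [_ [Z [HZ HZ']]]].
by rewrite -(LM_lmx H1 HZ) (LM_lmx H2 HZ').
Qed.

Lemma nseq_rcons (A : Type) (x : A) i : rcons (nseq i x) x = nseq i.+1 x.
Proof. by elim: i => [//|i IH] /=; rewrite IH. Qed.

Lemma lower N : exists (T : finType) (r : T) (par : T -> T) (lab : T -> 'I_3),
       [/\ is_trie r par lab, N <= #|T|,
           (exists s, dawg_node_list r par lab s /\ #|T| ^ 2 <= 16 * size s) &
           (exists s, dawg_edge_list r par lab s /\ #|T| ^ 2 <= 16 * size s)].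
Proof.
pose m := N.+1; have Hm : 0 < m by [].
exists 'I_(3 * m).+1, (lr m), (lpar (m:=m)), (llab (m:=m)).
have Hcard : #|'I_(3 * m).+1| = (3 * m).+1 by rewrite card_ord.
have Hmem : forall j i, j \in iota 1 m -> i \in iota 0 m -> 1 <= j <= m /\ i < m.
  by move=> j i; rewrite !mem_iota; lia.
have Hbound : ((3 * m).+1) ^ 2 <= 16 * (m * m) by nia.
split.
- exact: ltrie.
- rewrite Hcard; lia.
- exists [seq ww j i | j <- iota 1 m, i <- iota 0 m]; split; last first.
    by rewrite size_allpairs !size_iota Hcard.
  have HLM : forall x, x \in [seq ww j i | j <- iota 1 m, i <- iota 0 m] ->
      left_maximal (lr m) (lpar (m:=m)) (llab (m:=m)) x.
    move=> x /allpairsP [[j i] [/= Hj Hi ->]].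
    have [H1 H2] := Hmem j i Hj Hi; apply: ww_LM => //; exact: ltnW.
  split; first by move=> x Hx; case: (HLM x Hx).
  apply: pw_from_uniq.
    apply: allpairs_uniq; rewrite ?iota_uniq //.
    by move=> [j i] [j' i'] _ _ /= E; have [-> ->] := ww_inj Hm E.
  by move=> x y Hx Hy; apply: equiv_LM; apply: HLM.
- exists [seq (ww j i, cA) | j <- iota 1 m, i <- iota 0 m]; split; last first.
    by rewrite size_allpairs !size_iota Hcard.
  have HLM : forall e, e \in [seq (ww j i, cA) | j <- iota 1 m, i <- iota 0 m] ->
      left_maximal (lr m) (lpar (m:=m)) (llab (m:=m)) e.1 /\
      left_maximal (lr m) (lpar (m:=m)) (llab (m:=m)) (rcons e.1 e.2).
    move=> x /allpairsP [[j i] [/= Hj Hi ->]].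
    have [H1 H2] := Hmem j i Hj Hi; split; first by apply: ww_LM => //; exact: ltnW.
    have -> : rcons (ww j i) cA = ww j i.+1.
      by rewrite /ww rcons_cons rcons_cat nseq_rcons.
    exact: ww_LM.
  split; first by move=> x Hx; case: (HLM x Hx) => [[? _] [? _]]; split.
  apply: pw_from_uniq.
    apply: allpairs_uniq; rewrite ?iota_uniq //.
    by move=> [j i] [j' i'] _ _ /= E; have [-> ->] := ww_inj Hm (congr1 fst E).
  move=> [x a] [y b] Hx Hy [He _].
  have [Hx1 _] := HLM _ Hx; have [Hy1 _] := HLM _ Hy.
  have Exy := equiv_LM Hx1 Hy1 He.
  have [[j i] [_ _ /= Ex]] := allpairsP Hx.
  have [[j' i'] [_ _ /= Ey]] := allpairsP Hy.
  move: Exy; rewrite /= => Exy.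
  have -> : a = cA by case: Ex.
  have -> : b = cA by case: Ey.
  by rewrite Exy.
Qed.

Theorem theorem5 :
  (exists c : nat,
     forall (S T : finType) (r : T) (par : T -> T) (lab : T -> S),
       is_trie r par lab ->
       (forall s, dawg_node_list r par lab s -> size s <= c * #|T| ^ 2) /\
       (forall s, dawg_edge_list r par lab s -> size s <= c * #|T| ^ 2))
  /\
  (exists (S : finType) (d : nat), 0 < d /\
     forall N : nat, exists (T : finType) (r : T) (par : T -> T) (lab : T -> S),
       [/\ is_trie r par lab, N <= #|T|,
           (exists s, dawg_node_list r par lab s /\ #|T| ^ 2 <= d * size s) &
           (exists s, dawg_edge_list r par lab s /\ #|T| ^ 2 <= d * size s)]).
Proof.
split; first by exists 2; exact: upper.
by exists ('I_3 : finType), 16; split => //; exact: lower.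
Qed.
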